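(* Let $0 \le \alpha \le \beta < \infty$ and let $\varphi\colon\mathbb{R}\to\mathbb{R}$ satisfy $\alpha \le \frac{\varphi(a)-\varphi(b)}{a-b} \le \beta$ for all $a \ne b$; let $\phi$ denote componentwise application of $\varphi$. Let $L \ge 1$ and consider matrices $W_k$ ($k = 0,\dots,L$, with $W_L = I$), $H_k$, $G_k$ ($k = 0,\dots,L-1$) of compatible dimensions, and the network defined from input $x_0$ by $$y_k = W_k x_k \ (k = 0,\dots,L), \qquad x_{k+1} = H_k x_k + G_k \phi(y_k) \ (k = 0,\dots,L-1).$$ Let $\hat{H}_k := H_k + \frac{\alpha+\beta}{2} G_k W_k$, with the convention that $\hat H_k\cdots\hat H_{j+1} = I$ when $j=k$. Fix $p\in[1,\infty]$, use the $\ell_p$ norm on all vector spaces and the induced operator norm $\|\cdot\|$ on matrices. Define $m_0 := \|W_0\|$ and recursively, for $k = 0,\dots,L-1$, $$m_{k+1} := \|W_{k+1}\hat{H}_k \cdots \hat{H}_0\| + \frac{\beta - \alpha}{2}\sum_{j=0}^{k} \|W_{k+1}\hat{H}_k \cdots \hat{H}_{j+1} G_j\|\, m_j.$$ Then for each $k = 0,\dots,L$, $m_k$ is a Lipschitz constant of the map $x_0 \mapsto y_k$, i.e. $\|y_k(x_0) - y_k(x_0')\|_p \le m_k \|x_0 - x_0'\|_p$ for all inputs $x_0, x_0'$. In particular, $m_L$ is a Lipschitz constant of the network map $x_0 \mapsto y_L = x_L$. *)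

(* Defs.v *)
From HB Require Import structures.
From mathcomp Require Import all_boot all_order all_algebra.
From mathcomp Require Import all_classical all_reals all_analysis.
Set Implicit Arguments. Unset Strict Implicit. Unset Printing Implicit Defensive.
Import Order.TTheory GRing.Theory Num.Theory.
Local Open Scope ring_scope.

Section Defs.
Variable R : realType.

Definition lpnorm (p : \bar R) (a : nat) (v : 'cV[R]_a) : R :=
  match p with
  | EFin q => (\sum_(i < a) `|v i ord0| `^ q) `^ q^-1
  | _ => \big[Num.max/0]_(i < a) `|v i ord0|
  end.

Definition opnorm (p : \bar R) (a b : nat) (A : 'M[R]_(a, b)) : R :=
  sup [set lpnorm p (A *m x) | x in [set x : 'cV[R]_b | lpnorm p x <= 1]].

Variables (n d : nat -> nat).
Variables (W : forall k, 'M[R]_(d k, n k))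
          (H : forall k, 'M[R]_(n k.+1, n k))
          (G : forall k, 'M[R]_(n k.+1, d k)).
Variable phi : R -> R.

Fixpoint xs (x0 : 'cV[R]_(n 0)) (k : nat) : 'cV[R]_(n k) :=
  match k with
  | 0 => x0
  | k'.+1 => H k' *m xs x0 k' + G k' *m map_mx phi (W k' *m xs x0 k')
  end.

Definition ys (x0 : 'cV[R]_(n 0)) (k : nat) : 'cV[R]_(d k) := W k *m xs x0 k.

Definition Hhat (alpha beta : R) (k : nat) : 'M[R]_(n k.+1, n k) :=
  H k + ((alpha + beta) / 2) *: (G k *m W k).

(* prodH j i = \hat H_{i+j-1} ... \hat H_j  (identity when i = 0) *)
Fixpoint prodH (alpha beta : R) (j i : nat) : 'M[R]_(n (i + j), n j) :=
  match i with
  | 0 => 1%:M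
  | i'.+1 => Hhat alpha beta (i' + j) *m prodH alpha beta j i'
  end.

Lemma sub_addS_eq (k : nat) (j : 'I_k.+1) : (k - j + j.+1 = k.+1)%N.
Proof. by rewrite addnS subnK // -ltnS. Qed.

Definition WH0 (alpha beta : R) (k : nat) : 'M[R]_(d k.+1, n 0) :=
  W k.+1 *m castmx (congr1 n (addn0 k.+1), erefl) (prodH alpha beta 0 k.+1).

Definition WHG (alpha beta : R) (k : nat) (j : 'I_k.+1) : 'M[R]_(d k.+1, d j) :=
  W k.+1 *m castmx (congr1 n (sub_addS_eq j), erefl)
    (prodH alpha beta j.+1 (k - j)) *m G j.

End Defs.

(* Main.v *)
Require Import Defs.
From HB Require Import structures.
From mathcomp Require Import all_boot all_order all_algebra.
From mathcomp Require Import all_classical all_reals all_analysis.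
From mathcomp Require Import ring lra.
Import Order.TTheory GRing.Theory Num.Theory.
Set Implicit Arguments. Unset Strict Implicit. Unset Printing Implicit Defensive.
Local Open Scope ring_scope.

Section Norms.
Variable R : realType.

Lemma sum_ge1 (I : finType) (F : I -> R) i :
  (forall j, 0 <= F j) -> F i <= \sum_j F j.
Proof.
move=> F0; rewrite (bigD1 i) //= lerDl; exact: sumr_ge0.
Qed.

Definition fv a (v : 'cV[R]_a) (k : nat) : R :=
  oapp (fun i : 'I_a => v i ord0) 0 (insub k).

Lemma fv_ord a (v : 'cV[R]_a) (i : 'I_a) : fv v i = v i ord0.
Proof. by rewrite /fv valK. Qed.

Lemma fv_ge a (v : 'cV[R]_a) k : (a <= k)%N -> fv v k = 0.
Proof. by move=> h; rewrite /fv insubF // ltnNge h. Qed.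

Lemma fvD a (u v : 'cV[R]_a) : fv (u + v) = (fv u \+ fv v)%R.
Proof.
apply: funext => k /=; rewrite /fv; case: insub => [i|] /=; last by rewrite addr0.
by rewrite mxE.
Qed.

Lemma lp_count (q : R) a (v : 'cV[R]_a) : 0 < q ->
  Lnorm counting q%:E (EFin \o fv v) = (lpnorm q%:E v)%:E.
Proof.
move=> q0; rewrite Lnorm_counting //.
rewrite (@nneseries_split _ (fun k => `|(EFin \o fv v) k| `^ q)%E 0 a); last by move=> k _; apply: poweR_ge0.
rewrite add0n eseries0 ?adde0; last first.
  by move=> k hk _; rewrite /comp fv_ge // abse_EFin normr0 poweR_EFin powR0 // gt_eqF.
rewrite big_mkord.
under eq_bigr do rewrite /comp abse_EFin poweR_EFin fv_ord.
by rewrite sumEFin poweR_EFin.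
Qed.


Variable p : \bar R.
Hypothesis p1 : (1 <= p)%E.

Lemma lpnorm_ge0 a (v : 'cV[R]_a) : 0 <= lpnorm p v.
Proof.
case: p p1 => [q|_|//] /=; first by rewrite powR_ge0.
elim/big_ind: _ => //; first by move=> x y hx hy; rewrite le_max hx.
Qed.

Lemma lpnorm_comp a (v : 'cV[R]_a) i : `|v i ord0| <= lpnorm p v.
Proof.
case: p p1 => [q|_|//] /=; last exact: (le_bigmax 0 (fun i => `|v i ord0|) i).
rewrite lee_fin => q1.
have q0 : 0 < q by rewrite (lt_le_trans _ q1).
have -> : `|v i ord0| = (`|v i ord0| `^ q) `^ q^-1.
  by rewrite -powRrM mulfV ?gt_eqF // powRr1.
apply: ge0_ler_powR.
- by rewrite invr_ge0 ltW.
- by rewrite nnegrE powR_ge0.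
- by rewrite nnegrE sumr_ge0 // => j _; rewrite powR_ge0.
by apply: sum_ge1 => j; rewrite powR_ge0.
Qed.

Lemma lpnorm_mono a (u v : 'cV[R]_a) :
  (forall i, `|u i ord0| <= `|v i ord0|) -> lpnorm p u <= lpnorm p v.
Proof.
move=> huv; case: p p1 => [q|_|//] /=; last exact: le_bigmax2.
rewrite lee_fin => q1.
have q0 : 0 < q by rewrite (lt_le_trans _ q1).
apply: ge0_ler_powR.
- by rewrite invr_ge0 ltW.
- by rewrite nnegrE sumr_ge0 // => j _; rewrite powR_ge0.
- by rewrite nnegrE sumr_ge0 // => j _; rewrite powR_ge0.
apply: ler_sum => i _; apply: ge0_ler_powR => //; first exact: ltW.
Qed.

Lemma lpnorm_scale a c (v : 'cV[R]_a) : lpnorm p (c *: v) = `|c| * lpnorm p v.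
Proof.
case: p p1 => [q|_|//] /=.
  rewrite lee_fin => q1.
  have q0 : 0 < q by rewrite (lt_le_trans _ q1).
  under eq_bigr do rewrite mxE normrM powRM //.
  rewrite -mulr_sumr powRM; last 2 first.
  - exact: powR_ge0.
  - by rewrite sumr_ge0 // => j _; rewrite powR_ge0.
  by rewrite -powRrM mulfV ?gt_eqF // powRr1.
elim/big_rec2: _; first by rewrite mulr0.
by move=> i y1 y2 _ ->; rewrite mxE normrM maxr_pMr.
Qed.

Lemma lpnorm0 a : lpnorm p (0 : 'cV[R]_a) = 0.
Proof. by rewrite -(scale0r (0 : 'cV[R]_a)) lpnorm_scale normr0 mul0r. Qed.

Lemma lpnorm_eq0 a (v : 'cV[R]_a) : lpnorm p v = 0 -> v = 0.
Proof.
move=> h; apply/matrixP => i j; rewrite (ord1 j) mxE.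
by apply/normr0_eq0/le_anti; rewrite normr_ge0 andbT -h lpnorm_comp.
Qed.

Lemma lpnormD a (u v : 'cV[R]_a) : lpnorm p (u + v) <= lpnorm p u + lpnorm p v.
Proof.
have hu := lpnorm_comp u; have hv := lpnorm_comp v.
have hu0 := lpnorm_ge0 u; have hv0 := lpnorm_ge0 v.
case: p p1 hu hv hu0 hv0 => [q||//] /= + hu hv hu0 hv0.
  rewrite lee_fin => q1.
  have q0 : 0 < q by rewrite (lt_le_trans _ q1).
  have := @minkowski_EFin _ _ R counting (fv u) (fv v) q (fun _ _ _ => I) (fun _ _ _ => I) q1.
  by rewrite -fvD !lp_count // -EFinD lee_fin.
move=> _; apply: bigmax_le => [|i _]; first by rewrite addr_ge0.
by rewrite mxE (le_trans (ler_normD _ _)) // lerD.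
Qed.

End Norms.

Section Op.
Variable R : realType.
Variable p : \bar R.
Hypothesis p1 : (1 <= p)%E.

Lemma lpnorm_sum a k (f : 'I_k -> 'cV[R]_a) :
  lpnorm p (\sum_(j < k) f j) <= \sum_(j < k) lpnorm p (f j).
Proof.
elim/big_rec2: _ => [|j y1 y2 _ h]; first by rewrite lpnorm0.
by rewrite (le_trans (lpnormD p1 _ _)) // lerD2l.
Qed.

Lemma opnorm_has_sup a b (A : 'M[R]_(a, b)) :
  has_sup [set lpnorm p (A *m x) | x in [set x : 'cV[R]_b | lpnorm p x <= 1]].
Proof.
split; first by exists (lpnorm p (A *m 0)), 0 => //=; rewrite lpnorm0 ?ler01.
pose S := \sum_i \sum_j `|A i j|.
exists (lpnorm p (const_mx S : 'cV[R]_a)) => _ [x hx <-].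
apply: lpnorm_mono => // i; rewrite !mxE.
have S0 : 0 <= S by rewrite sumr_ge0 // => i' _; rewrite sumr_ge0.
rewrite (ger0_norm S0) (le_trans (ler_norm_sum _ _ _)) //.
apply: (@le_trans _ _ (\sum_j `|A i j|)).
  apply: ler_sum => j _; rewrite normrM ler_piMr //.
  exact: le_trans (lpnorm_comp p1 x j) hx.
by apply: (@sum_ge1 _ _ (fun i => \sum_j `|A i j|)) => i'; rewrite sumr_ge0.
Qed.

Lemma opnorm_ge0 a b (A : 'M[R]_(a, b)) : 0 <= opnorm p A.
Proof.
rewrite /opnorm; apply: (le_trans _ (sup_upper_bound (opnorm_has_sup A) _)).
  2: by exists 0 => //=; rewrite lpnorm0 ?ler01.
by rewrite mulmx0 lpnorm0.
Qed.

Lemma opnormP a b (A : 'M[R]_(a, b)) x :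
  lpnorm p (A *m x) <= opnorm p A * lpnorm p x.
Proof.
case: (eqVneq (lpnorm p x) 0) => [h|h].
  by rewrite (lpnorm_eq0 p1 h) mulmx0 !lpnorm0 // mulr0.
set s := lpnorm p x.
have s0 : 0 < s by rewrite lt_def h lpnorm_ge0.
have : lpnorm p (A *m (s^-1 *: x)) <= opnorm p A.
  rewrite /opnorm; apply: (sup_upper_bound (opnorm_has_sup A) _); exists (s^-1 *: x) => //=.
  rewrite lpnorm_scale // ger0_norm; last by rewrite invr_ge0 ltW.
  by rewrite mulVf.
rewrite -scalemxAr lpnorm_scale // ger0_norm; last by rewrite invr_ge0 ltW.
rewrite mulrC.
by rewrite ler_pdivrMr.
Qed.

Lemma castI a b (e : a = b) (v : 'cV[R]_a) :
  lpnorm p (castmx (e, erefl) (1%:M : 'M[R]_a) *m v) = lpnorm p v.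
Proof. by case: b / e; rewrite castmx_id mul1mx. Qed.

End Op.

Section Net.
Variable R : realType.
Variables (alpha beta : R) (phi : R -> R) (n d : nat -> nat).
Variables (W : forall k, 'M[R]_(d k, n k))
          (H : forall k, 'M[R]_(n k.+1, n k))
          (G : forall k, 'M[R]_(n k.+1, d k)).

Local Notation Hh := (Hhat W H G alpha beta).

Fixpoint Q (j K : nat) : 'M[R]_(n K, n j) :=
  match K with
  | 0 => conform_mx 0 (1%:M : 'M[R]_(n j))
  | K'.+1 => if (j <= K')%N then Hh K' *m Q j K'
             else conform_mx 0 (1%:M : 'M[R]_(n j))
  end.

Lemma Q_id j : Q j j = 1%:M.
Proof. by case: j => [|j] /=; rewrite ?ltnn conform_mx_id. Qed.

Lemma QS j K : (j <= K)%N -> Q j K.+1 = Hh K *m Q j K.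
Proof. by move=> h /=; rewrite h. Qed.

Lemma prodH_Q j i K (e : n (i + j) = n K) :
  (i + j = K)%N -> castmx (e, erefl) (prodH W H G alpha beta j i) = Q j K.
Proof.
move=> h; case: K / h e => e; rewrite castmx_id; clear e.
elim: i => [|i IH]; first exact: (esym (Q_id j)).
change (Hh (i + j) *m prodH W H G alpha beta j i = Q j (i + j).+1).
by rewrite QS ?leq_addl // IH.
Qed.

Lemma WH0_Q k : WH0 W H G alpha beta k = W k.+1 *m Q 0 k.+1.
Proof. by rewrite /WH0 (@prodH_Q 0 k.+1 k.+1 _ (addn0 _)). Qed.

Lemma WHG_Q k (j : 'I_k.+1) : WHG W H G alpha beta j = W k.+1 *m Q j.+1 k.+1 *m G j.
Proof. by rewrite /WHG (@prodH_Q j.+1 (k - j) k.+1 _ (sub_addS_eq j)). Qed.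

Lemma zlem (V : zmodType) (a b c e f : V) :
  (a + b) - (c + e) = (a - c + f) + (b - e - f).
Proof.
by rewrite -[in RHS]addrA [in RHS](addrC f) [in RHS]subrK opprD addrACA.
Qed.

Variables (x0 x0' : 'cV[R]_(n 0)).
Definition Dx K := xs W H G phi x0 K - xs W H G phi x0' K.
Definition ek K := map_mx phi (ys W H G phi x0 K) - map_mx phi (ys W H G phi x0' K)
  - ((alpha + beta) / 2) *: (ys W H G phi x0 K - ys W H G phi x0' K).

Lemma Dx_rec K : Dx K.+1 = Hh K *m Dx K + G K *m ek K.
Proof.
rewrite /Hhat /ek [G K *m (_ - _)]mulmxBr.
have -> : G K *m (((alpha + beta) / 2) *: (ys W H G phi x0 K - ys W H G phi x0' K))
   = (((alpha + beta) / 2) *: (G K *m W K)) *m Dx K.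
  by rewrite /ys /Dx -mulmxBr -scalemxAl -scalemxAr mulmxA.
rewrite /Dx mulmxDl !mulmxBr; exact: zlem.
Qed.

Lemma unroll K r (M : 'M[R]_(r, n K)) :
  M *m Dx K = M *m Q 0 K *m Dx 0
    + \sum_(j < K) M *m Q j.+1 K *m (G j *m ek j).
Proof.
elim: K r M => [|K IH] r M.
  by rewrite big_ord0 addr0 Q_id mulmx1.
rewrite Dx_rec mulmxDr mulmxA IH big_ord_recr /= ltnn conform_mx_id mulmx1 addrA.
congr (_ + _ + _); first by rewrite !mulmxA.
by apply: eq_bigr => j _; rewrite ltn_ord !mulmxA.
Qed.

Hypothesis hab : alpha <= beta.
Hypothesis hphi : forall a b : R, a != b ->
     alpha <= (phi a - phi b) / (a - b) <= beta.

Lemma ek_bound K i :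
  `|ek K i ord0| <= `|((beta - alpha) / 2 *: (ys W H G phi x0 K - ys W H G phi x0' K)) i ord0|.
Proof.
rewrite /ek; move: (ys W H G phi x0 K) (ys W H G phi x0' K) => Y Y'.
rewrite !mxE.
set a := Y i ord0; set b := Y' i ord0.
case: (eqVneq a b) => [->|hne]; first by rewrite !(subrr, mulr0, normr0).
have hab0 : a - b != 0 by rewrite subr_eq0.
have := hphi hne; set s := (phi a - phi b) / (a - b) => /andP[h1 h2].
have -> : phi a - phi b = s * (a - b) by rewrite /s divfK.
rewrite -mulrBl !normrM; apply: ler_wpM2r; first exact: normr_ge0.
rewrite -normrM [`|(beta - alpha) / 2|]ger0_norm; last by rewrite mulr_ge0 ?invr_ge0 ?subr_ge0.
have e1 : (beta - alpha)/2 - (s - (alpha+beta)/2) = beta - s by field.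
have e2 : (s - (alpha+beta)/2) + (beta - alpha)/2 = s - alpha by field.
rewrite ler_norml; apply/andP; split.
  by rewrite -subr_ge0 opprK e2 subr_ge0.
by rewrite -subr_ge0 e1 subr_ge0.
Qed.

End Net.

Unset Implicit Arguments.

Theorem theorem2 (R : realType) (alpha beta : R) (phi : R -> R)
  (L : nat) (n d : nat -> nat)
  (W : forall k, 'M[R]_(d k, n k))
  (H : forall k, 'M[R]_(n k.+1, n k))
  (G : forall k, 'M[R]_(n k.+1, d k))
  (p : \bar R) (m : nat -> R) :
  0 <= alpha -> alpha <= beta ->
  (forall a b : R, a != b ->
     alpha <= (phi a - phi b) / (a - b) <= beta) ->
  (1 <= L)%N ->
  forall hdL : d L = n L,
  W L = castmx (esym hdL, erefl) (1%:M : 'M[R]_(n L)) ->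
  (1 <= p)%E ->
  m 0%N = opnorm p (W 0%N) ->
  (forall k : nat, (k < L)%N ->
     m k.+1 = opnorm p (WH0 W H G alpha beta k)
              + (beta - alpha) / 2 *
                \sum_(j < k.+1) opnorm p (WHG W H G alpha beta j) * m j) ->
  (forall k : nat, (k <= L)%N ->
     forall x0 x0' : 'cV[R]_(n 0%N),
       lpnorm p (ys W H G phi x0 k - ys W H G phi x0' k)
         <= m k * lpnorm p (x0 - x0'))
  /\
  (forall x0 x0' : 'cV[R]_(n 0%N),
     lpnorm p (xs W H G phi x0 L - xs W H G phi x0' L)
       <= m L * lpnorm p (x0 - x0')).
Proof.
move=> ha hab hphi hL hdL hWL hp hm0 hm.
have d0 : 0 <= (beta - alpha) / 2 by rewrite mulr_ge0 ?invr_ge0 ?subr_ge0.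
have key : forall k, (k <= L)%N -> forall j, (j <= k)%N ->
    forall x0 x0' : 'cV[R]_(n 0%N),
       lpnorm p (ys W H G phi x0 j - ys W H G phi x0' j)
         <= m j * lpnorm p (x0 - x0').
  elim=> [|k IH] hk j hj.
    move: hj; rewrite leqn0 => /eqP -> x0 x0'.
    by rewrite /ys -mulmxBr hm0; apply: opnormP.
  move: hj; rewrite leq_eqVlt => /orP[/eqP ->|hj]; last first.
    by apply: IH (ltnW hk) _ _; rewrite -ltnS.
  move=> x0 x0'.
  rewrite /ys -mulmxBr.
  have := unroll alpha beta phi W H G x0 x0' (W k.+1).
  rewrite /Dx => ->.
  rewrite hm // mulrDl.
  apply: le_trans (lpnormD hp _ _) _; apply: lerD.
    by rewrite -WH0_Q; apply: opnormP.
  apply: le_trans (lpnorm_sum hp _) _.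
  rewrite -mulrA mulr_suml mulr_sumr; apply: ler_sum => i _.
  rewrite mulmxA -WHG_Q.
  apply: le_trans (opnormP hp _ _) _.
  apply: (@le_trans _ _ (opnorm p (WHG W H G alpha beta i) *
      ((beta - alpha) / 2 * (m i * lpnorm p (x0 - x0'))))); last by rewrite le_eqVlt; apply/orP; left; apply/eqP; ring.
  apply: ler_wpM2l; first exact: opnorm_ge0.
  apply: (@le_trans _ _ (lpnorm p (((beta - alpha) / 2) *:
       (ys W H G phi x0 i - ys W H G phi x0' i)))).
    apply: lpnorm_mono => // t; exact: ek_bound.
  rewrite lpnorm_scale // ger0_norm //; apply: ler_wpM2l => //.
  by apply: (IH (ltnW hk) i _ x0 x0'); rewrite -ltnS.
split; first by move=> k hk; apply: key hk _ (leqnn k).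
move=> x0 x0'.
have := key L (leqnn L) L (leqnn L) x0 x0'.
by rewrite /ys -mulmxBr hWL castI.
Qed.
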